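(* Let $m,n\ge1$, $a\in(0,\infty)^m$, $b\in(0,\infty)^n$, and let $\Omega$ be a real $m\times n$ matrix. Let $(A,B)_0$ be a point in the interior of $\tilde{\mathcal A}$ and define $(A,B)_{k+1}=T_2(T_1((A,B)_k))$. If $(\overline A,\overline B)$ is a limit point of the sequence $((A,B)_k)_k$, then $$F(T_1(\overline A,\overline B))=F(T_2(T_1(\overline A,\overline B)))=F(\overline A,\overline B).$$
   Context: $\mathcal A$ is the set of pairs $(A,B)$ of $(m+1)\times(n+1)$ real matrices (indices $i=0,\dots,m$, $j=0,\dots,n$) with: $A_{ij},B_{ij}\ge0$; $a_i=\sum_{j=0}^nA_{ij}$ for $i=1,\dots,m$; $A_{0j}=0$ for all $j$; $b_j=\sum_{i=0}^mB_{ij}$ for $j=1,\dots,n$; $B_{i0}=0$ for all $i$. $F(A,B)=\sum_{i=1}^m\sum_{j=1}^n\sqrt{A_{ij}B_{ij}}\,\Omega_{ij}$. $\tilde{\mathcal A}\subset\mathcal A$ consists of those $(A,B)$ with: (1) $A_{ij}=B_{ij}=0$ whenever $i,j\ge1$ and $\Omega_{ij}\le0$; (2) for $j\ge1$, $B_{0j}=0$ if there is $i\ge1$ with $\Omega_{ij}>0$; (3) for $i\ge1$, $A_{i0}=0$ if there is $j\ge1$ with $\Omega_{ij}>0$. $T_1(A,B)=(E,B)$ where $E_{ij}=A_{ij}$ if $i=0$ or $j=0$, and otherwise $E_{ij}=a_iB_{ij}\Omega_{ij}^2/\sum_{k=1}^nB_{ik}\Omega_{ik}^2$ if this denominator is positive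 and $0$ otherwise. $T_2(A,B)=(A,E)$ where $E_{ij}=B_{ij}$ if $i=0$ or $j=0$, and otherwise $E_{ij}=b_jA_{ij}\Omega_{ij}^2/\sum_{k=1}^mA_{kj}\Omega_{kj}^2$ if this denominator is positive and $0$ otherwise. ''Interior'' refers to the interior of $\tilde{\mathcal A}$ relative to the affine space it spans. *)

(* Defs.v *)
From mathcomp Require Import all_boot all_order all_algebra.
From mathcomp Require Import reals.
Set Implicit Arguments. Unset Strict Implicit. Unset Printing Implicit Defensive.
Import Order.TTheory GRing.Theory Num.Theory.
Local Open Scope ring_scope.

Section Defs.
Variables (R : realType) (m n : nat).

Definition pmx := ('M[R]_(m.+1, n.+1) * 'M[R]_(m.+1, n.+1))%type.

(* The index i in 1..m is represented as [lift ord0 i] for i : 'I_m;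
   similarly for columns. Omega : 'M_(m,n), a : 'I_m -> R, b : 'I_n -> R
   correspond to Omega_{i+1,j+1}, a_{i+1}, b_{j+1}. *)

Definition inA (a : 'I_m -> R) (b : 'I_n -> R) (p : pmx) : Prop :=
  let A := p.1 in let B := p.2 in
  [/\ forall i j, 0 <= A i j /\ 0 <= B i j,
      forall i : 'I_m, a i = \sum_(j < n.+1) A (lift ord0 i) j,
      forall j, A ord0 j = 0,
      forall j : 'I_n, b j = \sum_(i < m.+1) B i (lift ord0 j)
    & forall i, B i ord0 = 0].

Definition inAt (Omega : 'M[R]_(m, n)) (a : 'I_m -> R) (b : 'I_n -> R)
    (p : pmx) : Prop :=
  let A := p.1 in let B := p.2 in
  [/\ inA a b p,
      forall (i : 'I_m) (j : 'I_n), Omega i j <= 0 ->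
         A (lift ord0 i) (lift ord0 j) = 0 /\ B (lift ord0 i) (lift ord0 j) = 0,
      forall j : 'I_n, (exists i : 'I_m, 0 < Omega i j) -> B ord0 (lift ord0 j) = 0
    & forall i : 'I_m, (exists j : 'I_n, 0 < Omega i j) -> A (lift ord0 i) ord0 = 0].

Definition Fobj (Omega : 'M[R]_(m, n)) (p : pmx) : R :=
  \sum_(i < m) \sum_(j < n)
     Num.sqrt (p.1 (lift ord0 i) (lift ord0 j) * p.2 (lift ord0 i) (lift ord0 j))
       * Omega i j.

Definition T1 (Omega : 'M[R]_(m, n)) (a : 'I_m -> R) (p : pmx) : pmx :=
  (\matrix_(i < m.+1, j < n.+1)
     match unlift ord0 i, unlift ord0 j with
     | Some i', Some j' =>
         let d := \sum_(k < n) p.2 i (lift ord0 k) * Omega i' k ^+ 2 in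
         if 0 < d then a i' * p.2 i j * Omega i' j' ^+ 2 / d else 0
     | _, _ => p.1 i j
     end, p.2).

Definition T2 (Omega : 'M[R]_(m, n)) (b : 'I_n -> R) (p : pmx) : pmx :=
  (p.1, \matrix_(i < m.+1, j < n.+1)
     match unlift ord0 i, unlift ord0 j with
     | Some i', Some j' =>
         let d := \sum_(k < m) p.1 (lift ord0 k) j * Omega k j' ^+ 2 in
         if 0 < d then b j' * p.1 i j * Omega i' j' ^+ 2 / d else 0
     | _, _ => p.2 i j
     end).

Definition close (p q : pmx) (eps : R) : Prop :=
  forall i j, `|p.1 i j - q.1 i j| < eps /\ `|p.2 i j - q.2 i j| < eps.

Definition aff_span (S : pmx -> Prop) (q : pmx) : Prop :=
  exists (N : nat) (c : 'I_N -> R) (x : 'I_N -> pmx),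
    [/\ forall k, S (x k), \sum_(k < N) c k = 1,
        q.1 = \sum_(k < N) c k *: (x k).1
      & q.2 = \sum_(k < N) c k *: (x k).2].

Definition rel_interior (S : pmx -> Prop) (p : pmx) : Prop :=
  S p /\ exists2 eps : R, 0 < eps &
    forall q, aff_span S q -> close q p eps -> S q.

Definition limit_point (s : nat -> pmx) (L : pmx) : Prop :=
  forall eps : R, 0 < eps -> forall N : nat, exists2 k, (N <= k)%N & close (s k) L eps.

End Defs.

(* Main.v *)
Require Import Defs.
From mathcomp Require Import all_boot all_order all_algebra.
From mathcomp Require Import boolp classical_sets reals topology normedtype sequences realfun.
From mathcomp Require Import ring lra.
Import Order.TTheory GRing.Theory Num.Theory numFieldNormedType.Exports.
Local Open Scope ring_scope.

Require Import Defs.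

Section Alg.
Variable R : rcfType.

Lemma CS0 (N : nat) (u v : 'I_N -> R) :
  (\sum_k u k * v k) ^+ 2 <= (\sum_k u k ^+ 2) * (\sum_k v k ^+ 2).
Proof.
have E1 : (\sum_k u k ^+ 2) * (\sum_k v k ^+ 2) =
   \sum_i \sum_j (u i ^+ 2 * v j ^+ 2).
  rewrite mulr_suml; apply: eq_bigr => i _; by rewrite mulr_sumr.
have E2 : (\sum_k u k * v k) ^+ 2 =
   \sum_i \sum_j (u i * v i * (u j * v j)).
  rewrite expr2 mulr_suml; apply: eq_bigr => i _; by rewrite mulr_sumr.
have E3 : \sum_i \sum_j (u i ^+ 2 * v j ^+ 2) = \sum_i \sum_j (u j ^+ 2 * v i ^+ 2).
  by rewrite exchange_big.
have H : 0 <= \sum_i \sum_j (u i * v j - u j * v i) ^+ 2.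
  by apply: sumr_ge0 => i _; apply: sumr_ge0 => j _; apply: sqr_ge0.
have E4 : \sum_i \sum_j (u i * v j - u j * v i) ^+ 2 =
  \sum_i \sum_j (u i ^+ 2 * v j ^+ 2) + \sum_i \sum_j (u j ^+ 2 * v i ^+ 2)
  - 2 * \sum_i \sum_j (u i * v i * (u j * v j)).
  rewrite mulr_sumr -!big_split -sumrN -big_split /=; apply: eq_bigr => i _.
  rewrite mulr_sumr -!big_split -sumrN -big_split /=; apply: eq_bigr => j _.
  ring.
rewrite E1 E2; rewrite E4 -E3 in H; lra.
Qed.

Lemma CS (N : nat) (x y w : 'I_N -> R) (al : R) :
  (forall k, 0 <= x k) -> (forall k, 0 <= y k) -> \sum_k x k <= al ->
  \sum_k Num.sqrt (x k * y k) * w k <= Num.sqrt (al * \sum_k y k * w k ^+ 2).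
Proof.
move=> hx hy hal.
have h1 : \sum_k Num.sqrt (x k * y k) * w k <=
    \sum_k Num.sqrt (x k) * Num.sqrt (y k * w k ^+ 2).
  apply: ler_sum => k _.
  rewrite sqrtrM // [in X in _ <= X]sqrtrM // sqrtr_sqr mulrA.
  by rewrite ler_wpM2l ?mulr_ge0 ?sqrtr_ge0 // ler_norm.
apply: (le_trans h1).
set S := \sum_k _.
have h2 : S <= Num.sqrt (S ^+ 2) by rewrite sqrtr_sqr ler_norm.
apply: (le_trans h2); apply: ler_wsqrtr; rewrite /S.
have H3 := @CS0 _ (fun k => Num.sqrt (x k)) (fun k => Num.sqrt (y k * w k ^+ 2)).
rewrite /= in H3. apply: (le_trans H3).
rewrite (eq_bigr x); last by move=> k _; rewrite sqr_sqrtr.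
rewrite [X in _ * X <= _](eq_bigr (fun k => y k * w k ^+ 2)); last first.
  by move=> k _; rewrite sqr_sqrtr // mulr_ge0 // sqr_ge0.
apply: ler_wpM2r (hal); apply: sumr_ge0 => k _; rewrite mulr_ge0 // sqr_ge0 //.
Qed.

Lemma EQ (N : nat) (y w : 'I_N -> R) (al : R) :
  0 <= al -> (forall k, 0 <= y k) -> (forall k, w k < 0 -> y k = 0) ->
  \sum_k Num.sqrt ((if 0 < \sum_k y k * w k ^+ 2
                    then al * y k * w k ^+ 2 / \sum_k y k * w k ^+ 2 else 0) * y k) * w k
  = Num.sqrt (al * \sum_k y k * w k ^+ 2).
Proof.
move=> hal hy hw; set D := \sum_k y k * w k ^+ 2.
have D0 : 0 <= D by apply: sumr_ge0 => k _; rewrite mulr_ge0 // sqr_ge0 //.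
have [hD|hD] := boolP (0 < D); rewrite ?hD ?(negbTE hD); last first.
  have -> : D = 0 by apply/eqP; rewrite eq_le D0 andbT leNgt.
  rewrite mulr0 sqrtr0; apply: big1 => k _; by rewrite mul0r sqrtr0 mul0r.
transitivity (\sum_k Num.sqrt (al / D) * (y k * w k ^+ 2)).
  apply: eq_bigr => k _.
  have [wn|wp] := ltP (w k) 0.
    by rewrite hw // !(mulr0, mul0r) sqrtr0 mul0r.
  have -> : al * y k * w k ^+ 2 / D * y k = (al / D) * (y k * w k) ^+ 2.
    by rewrite exprMn; field; rewrite gt_eqF.
  rewrite sqrtrM ?divr_ge0 // sqrtr_sqr ger0_norm ?mulr_ge0 //.
  by rewrite expr2 !mulrA.
rewrite -mulr_sumr -/D.
rewrite -{2}(ger0_norm D0) -sqrtr_sqr -sqrtrM ?divr_ge0 //.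
congr Num.sqrt; rewrite expr2; field; by rewrite gt_eqF.
Qed.

Lemma RS (N : nat) (y w : 'I_N -> R) (al : R) :
  0 <= al ->
  \sum_k (if 0 < \sum_k y k * w k ^+ 2
          then al * y k * w k ^+ 2 / \sum_k y k * w k ^+ 2 else 0) <= al.
Proof.
move=> hal; set D := \sum_k y k * w k ^+ 2.
have [hD|hD] := boolP (0 < D); rewrite ?hD ?(negbTE hD); last by rewrite big1.
rewrite -mulr_suml.
rewrite (eq_bigr (fun k => al * (y k * w k ^+ 2))); last by move=> k _; rewrite mulrA.
by rewrite -mulr_sumr -/D mulfK // gt_eqF.
Qed.

Lemma T_ge0 (D al y w : R) : 0 <= al -> 0 <= y ->
  0 <= (if 0 < D then al * y * w ^+ 2 / D else 0).
Proof.
move=> ha hy; case: ifPn => // hD.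
apply: divr_ge0; last exact: ltW.
by rewrite mulr_ge0 ?sqr_ge0 ?mulr_ge0.
Qed.

End Alg.

Section Mat.
Local Open Scope classical_set_scope.
Variables (R : realType) (m n : nat) (Omega : 'M[R]_(m,n)) (a : 'I_m -> R) (b : 'I_n -> R).
Hypotheses (ha : forall i, 0 < a i) (hb : forall j, 0 < b j).

Local Notation li := (lift ord0).
Definition d1 (p : pmx R m n) i := \sum_(k<n) p.2 (li i) (li k) * Omega i k ^+ 2.
Definition e2 (p : pmx R m n) j := \sum_(k<m) p.1 (li k) (li j) * Omega k j ^+ 2.

Lemma T1E (p : pmx R m n) i j : (T1 Omega a p).1 (li i) (li j) =
  if 0 < d1 p i then a i * p.2 (li i) (li j) * Omega i j ^+ 2 / d1 p i else 0.
Proof. by rewrite /T1 /= mxE !liftK. Qed.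

Lemma T2E (p : pmx R m n) i j : (T2 Omega b p).2 (li i) (li j) =
  if 0 < e2 p j then b j * p.1 (li i) (li j) * Omega i j ^+ 2 / e2 p j else 0.
Proof. by rewrite /T2 /= mxE !liftK. Qed.

Definition G1 p := \sum_i Num.sqrt (a i * d1 p i).
Definition G2 p := \sum_j Num.sqrt (b j * e2 p j).

Definition Inv (p : pmx R m n) : Prop :=
  [/\ forall i j, 0 <= p.1 (li i) (li j) /\ 0 <= p.2 (li i) (li j),
      forall i, \sum_j p.1 (li i) (li j) <= a i,
      forall j, \sum_i p.2 (li i) (li j) <= b j
    & forall i j, Omega i j < 0 -> p.2 (li i) (li j) = 0].
Definition Inv' (p : pmx R m n) : Prop :=
  [/\ forall i j, 0 <= p.1 (li i) (li j) /\ 0 <= p.2 (li i) (li j),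
      forall i, \sum_j p.1 (li i) (li j) <= a i,
      forall j, \sum_i p.2 (li i) (li j) <= b j
    & forall i j, Omega i j < 0 -> p.1 (li i) (li j) = 0].

Lemma F_le_G1 (p : pmx R m n) : (forall i j, 0 <= p.1 (li i) (li j) /\ 0 <= p.2 (li i) (li j)) ->
  (forall i, \sum_j p.1 (li i) (li j) <= a i) -> Fobj Omega p <= G1 p.
Proof.
move=> h0 hr; rewrite /Fobj /G1; apply: ler_sum => i _.
exact: (@CS R n (fun j => p.1 (li i) (li j)) (fun j => p.2 (li i) (li j))
   (fun j => Omega i j) (a i) (fun j => (h0 i j).1) (fun j => (h0 i j).2) (hr i)).
Qed.

Lemma F_le_G2 (p : pmx R m n) : (forall i j, 0 <= p.1 (li i) (li j) /\ 0 <= p.2 (li i) (li j)) ->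
  (forall j, \sum_i p.2 (li i) (li j) <= b j) -> Fobj Omega p <= G2 p.
Proof.
move=> h0 hc; rewrite /Fobj /G2 exchange_big; apply: ler_sum => j _ /=.
rewrite (eq_bigr (fun i => Num.sqrt (p.2 (li i) (li j) * p.1 (li i) (li j)) * Omega i j));
  last by move=> i _; rewrite (mulrC (p.1 _ _)).
exact: (@CS R m (fun i => p.2 (li i) (li j)) (fun i => p.1 (li i) (li j))
   (fun i => Omega i j) (b j) (fun i => (h0 i j).2) (fun i => (h0 i j).1) (hc j)).
Qed.

Lemma F_T1 (p : pmx R m n) : Inv p -> Fobj Omega (T1 Omega a p) = G1 p.
Proof.
case=> h0 _ _ hz; rewrite /Fobj /G1; apply: eq_bigr => i _.
under eq_bigr => j _ do rewrite T1E /=.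
exact: (@EQ R n (fun j => p.2 (li i) (li j)) (fun j => Omega i j) (a i)
  (ltW (ha i)) (fun j => (h0 i j).2) (fun j hj => hz i j hj)).
Qed.

Lemma F_T2 (p : pmx R m n) : Inv' p -> Fobj Omega (T2 Omega b p) = G2 p.
Proof.
case=> h0 _ _ hz; rewrite /Fobj /G2 exchange_big; apply: eq_bigr => j _ /=.
under eq_bigr => i _ do rewrite T2E (mulrC (p.1 _ _)).
exact: (@EQ R m (fun i => p.1 (li i) (li j)) (fun i => Omega i j) (b j)
  (ltW (hb j)) (fun i => (h0 i j).1) (fun i hi => hz i j hi)).
Qed.

Lemma Inv_T1 (p : pmx R m n) : Inv p -> Inv' (T1 Omega a p).
Proof.
case=> h0 hr hc hz; split => /=.
- move=> i j; split; last exact: (h0 i j).2.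
  by rewrite T1E; apply: T_ge0; [exact: ltW | exact: (h0 i j).2].
- move=> i; under eq_bigr => j _ do rewrite T1E.
  exact: (@RS R n (fun j => p.2 (li i) (li j)) (fun j => Omega i j) (a i) (ltW (ha i))).
- exact: hc.
- move=> i j hij; rewrite T1E hz //; case: ifP => _; by rewrite ?(mulr0, mul0r).
Qed.

Lemma Inv_T2 (p : pmx R m n) : Inv' p -> Inv (T2 Omega b p).
Proof.
case=> h0 hr hc hz; split => /=.
- move=> i j; split; first exact: (h0 i j).1.
  by rewrite T2E; apply: T_ge0; [exact: ltW | exact: (h0 i j).1].
- exact: hr.
- move=> j; under eq_bigr => i _ do rewrite T2E.
  exact: (@RS R m (fun i => p.1 (li i) (li j)) (fun i => Omega i j) (b j) (ltW (hb j))).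
- move=> i j hij; rewrite T2E hz //; case: ifP => _; by rewrite ?(mulr0, mul0r).
Qed.


Definition ff (p : pmx R m n) := T2 Omega b (T1 Omega a p).

Lemma F_mono (p : pmx R m n) : Inv p ->
  Fobj Omega p <= Fobj Omega (T1 Omega a p) /\
  Fobj Omega (T1 Omega a p) <= Fobj Omega (ff p).
Proof.
move=> hp; have hp' := Inv_T1 _ hp.
case: (hp) => h0 hr _ _; case: (hp') => h0' _ hc' _.
split; first by rewrite F_T1 //; exact: F_le_G1.
by rewrite /ff F_T2 //; exact: F_le_G2.
Qed.

Lemma Inv_ff (p : pmx R m n) : Inv p -> Inv (ff p).
Proof. by move=> hp; apply: Inv_T2; apply: Inv_T1. Qed.

Lemma Inv_iter (p0 : pmx R m n) k : Inv p0 -> Inv (iter k ff p0).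
Proof. by move=> h; elim: k => [|k IH] //=; apply: Inv_ff. Qed.

Lemma F_iter_mono (p0 : pmx R m n) k l : Inv p0 -> (k <= l)%N ->
  Fobj Omega (iter k ff p0) <= Fobj Omega (iter l ff p0).
Proof.
move=> h; elim: l => [|l IH]; first by rewrite leqn0 => /eqP ->.
rewrite leq_eqVlt => /orP [/eqP -> //|]; rewrite ltnS => /IH hkl.
apply: (le_trans hkl); rewrite iterS.
have [h1 h2] := F_mono _ (Inv_iter _ l h); exact: le_trans h1 h2.
Qed.

Lemma Inv_of_inAt (p : pmx R m n) : inAt Omega a b p -> Inv p.
Proof.
case=> [[h0 ha' hA0 hb' hB0] hz _ _]; split.
- by move=> i j; have [] := h0 (lift ord0 i) (lift ord0 j).
- move=> i; rewrite ha' big_ord_recl lerDr; exact: (h0 _ _).1.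
- move=> j; rewrite hb' big_ord_recl lerDr; exact: (h0 _ _).2.
- by move=> i j hij; have [] := hz i j (ltW hij).
Qed.

Lemma cvg_sumN (N : nat) (f : 'I_N -> nat -> R) (l : 'I_N -> R) :
  (forall k, f k t @[t --> \oo] --> l k) ->
  (\sum_(k < N) f k t) @[t --> \oo] --> \sum_(k < N) l k.
Proof.
elim: N f l => [|N IH] f l H.
  rewrite big_ord0; under eq_cvg do rewrite big_ord0; exact: cvg_cst.
rewrite big_ord_recr; under eq_cvg do rewrite big_ord_recr.
apply: cvgD; last exact: H.
exact: (IH (fun k => f (widen_ord (leqnSn N) k)) (fun k => l (widen_ord (leqnSn N) k))).
Qed.

Lemma cvg_sqrt (g : nat -> R) (l : R) :
  g t @[t --> \oo] --> l -> Num.sqrt (g t) @[t --> \oo] --> Num.sqrt l.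
Proof. by move=> H; apply: continuous_cvg => //; exact: sqrt_continuous. Qed.


Lemma main_sec (p0 L : pmx R m n) : Inv p0 ->
  limit_point (fun k => iter k ff p0) L ->
  Fobj Omega (T1 Omega a L) = Fobj Omega (ff L) /\ Fobj Omega (ff L) = Fobj Omega L.
Proof.
move=> h0 hL.
pose P k := iter k ff p0.
have hex : forall j : nat, exists k, (j <= k)%N /\ close (P k) L (harmonic j).
  move=> j; have [k hk hc] := hL (harmonic j) (harmonic_gt0 j) j; by exists k.
have [kk hkk] := choice hex.
pose s t := P (kk t).
have hInvs t : Inv (s t) by apply: Inv_iter.
have conv1 : forall i j, (s t).1 i j @[t --> \oo] --> L.1 i j.
  move=> i j; apply/cvgrPdist_lt => e e0.
  move: (@cvg_harmonic R) => /cvgrPdist_lt /(_ e e0).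
  apply: filterS => t ht.
  rewrite sub0r normrN ger0_norm ?harmonic_ge0 // in ht.
  have := ((hkk t).2 i j).1; rewrite distrC => h; exact: lt_trans h ht.
have conv2 : forall i j, (s t).2 i j @[t --> \oo] --> L.2 i j.
  move=> i j; apply/cvgrPdist_lt => e e0.
  move: (@cvg_harmonic R) => /cvgrPdist_lt /(_ e e0).
  apply: filterS => t ht.
  rewrite sub0r normrN ger0_norm ?harmonic_ge0 // in ht.
  have := ((hkk t).2 i j).2; rewrite distrC => h; exact: lt_trans h ht.
have hL0 : Inv L.
  split.
  - move=> i j; split.
      apply: (cvgr_to_ge (conv1 _ _)); apply: nearW => t.
      by case: (hInvs t) => h _ _ _; exact: (h i j).1.
    apply: (cvgr_to_ge (conv2 _ _)); apply: nearW => t.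
    by case: (hInvs t) => h _ _ _; exact: (h i j).2.
  - move=> i; have := @cvg_sumN n (fun j t => (s t).1 (lift ord0 i) (lift ord0 j))
      (fun j => L.1 (lift ord0 i) (lift ord0 j)) (fun j => conv1 _ _).
    move/cvgr_to_le; apply.
    by apply: nearW => t; case: (hInvs t) => _ h _ _; exact: h.
  - move=> j; have := @cvg_sumN m (fun i t => (s t).2 (lift ord0 i) (lift ord0 j))
      (fun i => L.2 (lift ord0 i) (lift ord0 j)) (fun i => conv2 _ _).
    move/cvgr_to_le; apply.
    by apply: nearW => t; case: (hInvs t) => _ _ h _; exact: h.
  - move=> i j hij; apply/eqP; rewrite eq_le; apply/andP; split.
      apply: (cvgr_to_le (conv2 _ _)); apply: nearW => t.
      by case: (hInvs t) => _ _ _ h; rewrite h.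
    apply: (cvgr_to_ge (conv2 _ _)); apply: nearW => t.
    by case: (hInvs t) => _ _ _ h; rewrite h.
have Fconv : Fobj Omega (s t) @[t --> \oo] --> Fobj Omega L.
  apply: cvg_sumN => i; apply: cvg_sumN => j.
  apply: cvgM; last exact: cvg_cst.
  by apply: cvg_sqrt; apply: cvgM; [exact: conv1 | exact: conv2].
have hFk : forall k, Fobj Omega (P k) <= Fobj Omega L.
  move=> k; apply: (cvgr_to_ge Fconv); apply: filterS (nbhs_infty_ge k) => t hkt.
  apply: (F_iter_mono _ _ _ h0); exact: leq_trans hkt (hkk t).1.
have d1conv : forall i, d1 (s t) i @[t --> \oo] --> d1 L i.
  move=> i; apply: cvg_sumN => k; apply: cvgM; [exact: conv2 | exact: cvg_cst].
pose c i j (p : pmx R m n) := if 0 < d1 L i then (T1 Omega a p).1 (lift ord0 i) (lift ord0 j) else 0.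
pose H (p : pmx R m n) := \sum_j Num.sqrt (b j * \sum_i c i j p * Omega i j ^+ 2).
have HL : H L = G2 (T1 Omega a L).
  rewrite /H /G2; apply: eq_bigr => j _; congr (Num.sqrt (_ * _)); rewrite /e2.
  apply: eq_bigr => i _; rewrite /c; case: ifPn => // hd.
  by rewrite T1E (negbTE hd).
have Hconv : H (s t) @[t --> \oo] --> H L.
  apply: cvg_sumN => j; apply: cvg_sqrt; apply: cvgM; first exact: cvg_cst.
  apply: cvg_sumN => i; apply: cvgM; last exact: cvg_cst.
  rewrite /c; case: ifPn => hd; last exact: cvg_cst.
  have E : forall t, (T1 Omega a (s t)).1 (lift ord0 i) (lift ord0 j) =
      a i * (s t).2 (lift ord0 i) (lift ord0 j) * Omega i j ^+ 2 / d1 (s t) i.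
    move=> t; rewrite T1E; case: ifPn => // hd'.
    have -> : d1 (s t) i = 0.
      apply/eqP; rewrite eq_le leNgt hd' /=.
      apply: sumr_ge0 => k _; rewrite mulr_ge0 ?sqr_ge0 //.
      by case: (hInvs t) => h _ _ _; exact: (h _ _).2.
    by rewrite invr0 mulr0.
  under eq_cvg do rewrite E.
  rewrite T1E hd.
  apply: cvgM; last by apply: cvgV; [rewrite gt_eqF | exact: d1conv].
  apply: cvgM; last exact: cvg_cst.
  by apply: cvgM; [exact: cvg_cst | exact: conv2].
have Hle : forall t, H (s t) <= Fobj Omega L.
  move=> t; apply: le_trans (hFk (kk t).+1).
  rewrite /P iterS /ff F_T2; last exact: (Inv_T1 _ (hInvs t)).
  rewrite /H /G2; apply: ler_sum => j _; apply: ler_wsqrtr.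
  apply: ler_wpM2l; first exact: ltW (hb j).
  rewrite /e2; apply: ler_sum => i _; apply: ler_wpM2r; first exact: sqr_ge0.
  rewrite /c; case: ifPn => _ //.
  by case: (Inv_T1 _ (hInvs t)) => h _ _ _; exact: (h i j).1.
have key : G2 (T1 Omega a L) <= Fobj Omega L.
  by rewrite -HL; apply: (cvgr_to_le Hconv); apply: nearW.
have [A1 A2] := F_mono _ hL0.
have E2 : Fobj Omega (ff L) = G2 (T1 Omega a L) by rewrite /ff F_T2 //; exact: Inv_T1.
split; lra.
Qed.

End Mat.

Theorem lemma2p17 (R : realType) (m n : nat) (hm : (1 <= m)%N) (hn : (1 <= n)%N)
  (a : 'I_m -> R) (b : 'I_n -> R) (Omega : 'M[R]_(m, n))
  (ha : forall i, 0 < a i) (hb : forall j, 0 < b j)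
  (p0 : pmx R m n) (hp0 : rel_interior (inAt Omega a b) p0)
  (L : pmx R m n)
  (hL : limit_point (fun k => iter k (fun p => T2 Omega b (T1 Omega a p)) p0) L) :
  Fobj Omega (T1 Omega a L) = Fobj Omega (T2 Omega b (T1 Omega a L)) /\
  Fobj Omega (T2 Omega b (T1 Omega a L)) = Fobj Omega L.
Proof.
exact: (@main_sec R m n Omega a b ha hb p0 L (@Inv_of_inAt R m n Omega a b p0 hp0.1) hL).
Qed.
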